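(* Let $m\ge 2$, $n=n_1+\cdots+n_r$, and let $\mathcal{A},\mathcal{B}$ be real $m$-th order $n$-dimensional tensors such that $\mathcal{A}x^m\neq 0$ for every $x\in\mathcal{K}\setminus\{0\}$. Define $\lambda(x)=\mathcal{B}x^m/\mathcal{A}x^m$ and $F(x)=\lambda(x)\mathcal{A}x^{m-1}-\mathcal{B}x^{m-1}$ for $x\in\mathcal{K}\setminus\{0\}$. If $\bar x\in\mathcal{K}_0$ satisfies $$F(\bar x)^\top(z-\bar x)\ge 0\quad\text{for all } z\in\mathcal{K}_0,$$ then $(\bar x,\lambda(\bar x))$ is a solution of the second-order cone tensor eigenvalue complementarity problem, i.e. $\bar x\neq 0$, $\bar x\in\mathcal{K}$, $\bar w:=(\lambda(\bar x)\mathcal{A}-\mathcal{B})\bar x^{m-1}\in\mathcal{K}$ and $\langle \bar x,\bar w\rangle=0$.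
   Context: A real $m$-th order $n$-dimensional tensor is an array $\mathcal{A}=(a_{i_1\ldots i_m})$, $a_{i_1\ldots i_m}\in\mathbb{R}$, $1\le i_1,\ldots,i_m\le n$. For $x\in\mathbb{R}^n$, $\mathcal{A}x^{m-1}\in\mathbb{R}^n$ has $i$-th component $\sum_{i_2,\ldots,i_m=1}^n a_{ii_2\ldots i_m}x_{i_2}\cdots x_{i_m}$, and $\mathcal{A}x^m=\sum_{i_1,\ldots,i_m=1}^n a_{i_1\ldots i_m}x_{i_1}\cdots x_{i_m}$. Vectors $x\in\mathbb{R}^n$ are written $x=(x^1,\ldots,x^r)\in\mathbb{R}^{n_1}\times\cdots\times\mathbb{R}^{n_r}$ with $x^i=(x^i_\circ,x^i_\bullet)\in\mathbb{R}\times\mathbb{R}^{n_i-1}$. The second-order cone is $\mathcal{K}=\mathcal{K}^{n_1}\times\cdots\times\mathcal{K}^{n_r}$ with $\mathcal{K}^{n_i}=\{x^i\in\mathbb{R}^{n_i}: x^i_\circ\ge\|x^i_\bullet\|\}$ (Euclidean norm); $\mathcal{K}$ is self-dual. Let $e=(e^1,\ldots,e^r)$ with $e^i=(1,0,\ldots,0)^\top\in\mathbb{R}^{n_i}$ and $\mathcal{K}_0=\{x\in\mathcal{K}: e^\top x=1\}$. *)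

(* Defs.v *)
From HB Require Import structures.
From mathcomp Require Import all_boot all_order all_algebra.
From mathcomp Require Import reals.
Set Implicit Arguments. Unset Strict Implicit. Unset Printing Implicit Defensive.
Import Order.TTheory GRing.Theory Num.Theory.
Local Open Scope ring_scope.

(* A real m-th order n-dimensional tensor: a real entry for every
   index tuple (i_1,...,i_m), encoded as a finite function 'I_m -> 'I_n. *)
Definition tensor (R : Type) (m n : nat) := {ffun 'I_m -> 'I_n} -> R.

Section Defs.
Variable R : realType.

Definition tpow (m n : nat) (A : tensor R m n) (x : 'rV[R]_n) : R :=
  \sum_(idx : {ffun 'I_m -> 'I_n}) A idx * \prod_(k : 'I_m) x 0 (idx k).

(* A x^(m-1): i-th component sums over idx with first index i_1 = i,
   multiplying x over the remaining m-1 indices. *)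
Definition tpow1 (m n : nat) (A : tensor R m n) (x : 'rV[R]_n) : 'rV[R]_n :=
  \row_(i < n) \sum_(idx : {ffun 'I_m -> 'I_n} |
                       [forall k : 'I_m, (val k == 0%N) ==> (idx k == i)])
      A idx * \prod_(k : 'I_m | val k != 0%N) x 0 (idx k).

Definition tcomb (m n : nat) (lam : R) (A B : tensor R m n) : tensor R m n :=
  fun idx => lam * A idx - B idx.

(* first component x_o of a block vector (0 if the block is empty) *)
Definition blk_head (k : nat) (v : 'rV[R]_k) : R :=
  \sum_(j : 'I_k | val j == 0%N) v 0 j.

Definition in_soc (k : nat) (v : 'rV[R]_k) : Prop :=
  Num.sqrt (\sum_(j : 'I_k | val j != 0%N) v 0 j ^+ 2) <= blk_head v.

Definition in_K (r : nat) (ns : 'I_r -> nat) (x : 'rV[R]_(\sum_(i < r) ns i)) : Prop :=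
  forall i : 'I_r, in_soc (submxrow x i).

Definition eTx (r : nat) (ns : 'I_r -> nat) (x : 'rV[R]_(\sum_(i < r) ns i)) : R :=
  \sum_(i < r) blk_head (submxrow x i).

Definition in_K0 (r : nat) (ns : 'I_r -> nat) (x : 'rV[R]_(\sum_(i < r) ns i)) : Prop :=
  in_K x /\ eTx x = 1.

Definition dotv (n : nat) (x y : 'rV[R]_n) : R := \sum_(j < n) x 0 j * y 0 j.

End Defs.

Arguments in_K {R r} ns x.
Arguments eTx {R r} ns x.
Arguments in_K0 {R r} ns x.

(* Main.v *)
Require Import Defs.
From HB Require Import structures.
From mathcomp Require Import all_boot all_order all_algebra.
From mathcomp Require Import reals.
Import Order.TTheory GRing.Theory Num.Theory.
Set Implicit Arguments. Unset Strict Implicit.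
Local Open Scope ring_scope.

Section S.
Variable R : realType.

Lemma dotvE n (x y : 'rV[R]_n) : dotv x y = (x *m y^T) 0 0.
Proof. by rewrite /dotv !mxE; apply: eq_bigr => j _; rewrite !mxE. Qed.

Lemma dotv_blk r (ns : 'I_r -> nat) (x y : 'rV[R]_(\sum_(i < r) ns i)) :
  dotv x y = \sum_(i < r) dotv (submxrow x i) (submxrow y i).
Proof.
rewrite dotvE -[x]submxrowK -[y]submxrowK tr_mxrow mul_mxrow_mxcol summxE.
by apply: eq_bigr => i _; rewrite dotvE !mxrowK.
Qed.

Lemma dotvC n (x y : 'rV[R]_n) : dotv x y = dotv y x.
Proof. by apply: eq_bigr => j _; rewrite mulrC. Qed.

Lemma dotvBr n (x y z : 'rV[R]_n) : dotv x (y - z) = dotv x y - dotv x z.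
Proof. rewrite /dotv -sumrB; apply: eq_bigr => j _; by rewrite !mxE mulrBr. Qed.

Lemma tpow1_comb m n lam (A B : tensor R m n) x :
  tpow1 (tcomb lam A B) x = lam *: tpow1 A x - tpow1 B x.
Proof.
apply/rowP => i; rewrite !mxE mulr_sumr -sumrB; apply: eq_bigr => idx _.
by rewrite /tcomb mulrBl mulrA.
Qed.

Lemma dotv_tpow1 m n (A : tensor R m n) x : (0 < m)%N ->
  dotv x (tpow1 A x) = tpow A x.
Proof.
move=> m0; set k0 : 'I_m := Ordinal m0.
rewrite /dotv /tpow.
have E : forall i (idx : {ffun 'I_m -> 'I_n}),
   [forall k : 'I_m, (val k == 0%N) ==> (idx k == i)] = (idx k0 == i).
  move=> i idx; apply/forallP/idP => [H|/eqP <- k].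
    by have /implyP := H k0; apply.
  by apply/implyP => /eqP k0E; have -> : k = k0 by apply/val_inj.
under eq_bigr => i _ do rewrite mxE (eq_bigl _ _ (E i)) big_mkcond mulr_sumr /=.
rewrite exchange_big /=; apply: eq_bigr => idx _.
rewrite (bigD1 (idx k0)) //= eqxx [X in _ + X]big1 ?addr0; last first.
  by move=> i /negbTE; rewrite eq_sym => ->; rewrite mulr0.
rewrite (bigD1 k0 (P := predT)) //= mulrCA; congr (_ * (_ * _)).
Qed.

Definition tsq k (v : 'rV[R]_k) := \sum_(l : 'I_k | val l != 0%N) v 0 l ^+ 2.
Definition tvec k (v : 'rV[R]_k) : 'rV[R]_k :=
  \row_l (if val l == 0%N then 1 else - (v 0 l / Num.sqrt (tsq v))).

Lemma tsq_ge0 k (v : 'rV[R]_k) : 0 <= tsq v.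
Proof. by apply: sumr_ge0 => l _; rewrite sqr_ge0. Qed.

Lemma tsq_div k (v : 'rV[R]_k) : tsq v / Num.sqrt (tsq v) = Num.sqrt (tsq v).
Proof.
have [->|s0] := eqVneq (tsq v) 0; first by rewrite sqrtr0 mul0r.
have hs : Num.sqrt (tsq v) != 0 by rewrite sqrtr_eq0 -ltNge lt_def s0 tsq_ge0.
by rewrite -{1}(sqr_sqrtr (tsq_ge0 v)) expr2 mulfK.
Qed.

Lemma head_pred k (k0 : (0 < k)%N) (j : 'I_k) : (val j == 0%N) = (j == Ordinal k0).
Proof. by rewrite -(inj_eq val_inj). Qed.

Lemma tvec_head k (v : 'rV[R]_k) : (0 < k)%N -> blk_head (tvec v) = 1.
Proof.
move=> k0; rewrite /blk_head (eq_bigl _ _ (head_pred k0)) big_pred1_eq mxE /=.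
by [].
Qed.

Lemma tvec_soc k (v : 'rV[R]_k) : (0 < k)%N -> in_soc (tvec v).
Proof.
move=> k0; rewrite /in_soc tvec_head //.
have -> : \sum_(j < k | val j != 0%N) tvec v 0 j ^+ 2 = tsq v / (Num.sqrt (tsq v))^+2.
  rewrite /tsq mulr_suml; apply: eq_bigr => j /negbTE hj.
  by rewrite mxE hj sqrrN expr_div_n.
rewrite sqr_sqrtr ?tsq_ge0 //.
have [->|s0] := eqVneq (tsq v) 0; first by rewrite mul0r sqrtr0 ler01.
by rewrite divff // sqrtr1.
Qed.

Lemma tvec_dot k (v : 'rV[R]_k) : (0 < k)%N ->
  dotv v (tvec v) = blk_head v - Num.sqrt (tsq v).
Proof.
move=> k0; rewrite /dotv (bigID (fun l : 'I_k => val l == 0%N)) /=.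
congr (_ + _).
  by apply: eq_bigr => j hj; rewrite mxE hj mulr1.
rewrite -tsq_div /tsq mulr_suml -sumrN; apply: eq_bigr => j /negbTE hj.
by rewrite mxE hj mulrN mulrA expr2.
Qed.

Lemma zero_soc k : in_soc (0 : 'rV[R]_k).
Proof.
rewrite /in_soc /blk_head big1 ?sqrtr0 ?big1 //.
  by move=> j _; rewrite mxE.
by move=> j _; rewrite mxE expr0n.
Qed.

End S.

Lemma dotvZr (R : realType) n (x y : 'rV[R]_n) a : dotv x (a *: y) = a * dotv x y.
Proof. rewrite /dotv mulr_sumr; apply: eq_bigr => j _; by rewrite mxE mulrCA. Qed.

Unset Implicit Arguments.
Theorem theorem1 (R : realType) (m r : nat) (ns : 'I_r -> nat)
  (A B : tensor R m (\sum_(i < r) ns i)) :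
  (2 <= m)%N ->
  (forall i, (0 < ns i)%N) ->
  (forall x : 'rV[R]_(\sum_(i < r) ns i), in_K ns x -> x != 0 -> tpow A x != 0) ->
  let lam := fun x => tpow B x / tpow A x in
  let F := fun x => lam x *: tpow1 A x - tpow1 B x in
  forall xbar : 'rV[R]_(\sum_(i < r) ns i),
    in_K0 ns xbar ->
    (forall z, in_K0 ns z -> 0 <= dotv (F xbar) (z - xbar)) ->
    let wbar := tpow1 (tcomb (lam xbar) A B) xbar in
    [/\ xbar != 0, in_K ns xbar, in_K ns wbar & dotv xbar wbar = 0].
Proof.
move=> hm hns hA lam F xbar [hK he] hVI wbar.
have m0 : (0 < m)%N by apply: leq_trans hm.
have hW : wbar = F xbar by rewrite /wbar tpow1_comb.
have xnz : xbar != 0.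
  apply/eqP => x0; move: he; rewrite x0 /eTx big1; first by move/eqP; rewrite eq_sym oner_eq0.
  move=> i _; rewrite submxrow0 /blk_head big1 // => j _; by rewrite mxE.
have hA0 : tpow A xbar != 0 by apply: hA.
have hdot : dotv xbar wbar = 0.
  rewrite hW /F dotvBr dotvZr !dotv_tpow1 // /lam divfK // subrr //.
split => // i.

pose z := mxrow (fun j => if j == i then tvec (submxrow wbar j) else 0).
have hzj : forall j, submxrow z j = if j == i then tvec (submxrow wbar j) else 0.
  by move=> j; rewrite mxrowK.
have hz : in_K0 ns z.
  split.
    move=> j; rewrite hzj; case: ifP => _; [exact: tvec_soc | exact: zero_soc].
  rewrite /eTx (bigD1 i) //= hzj eqxx tvec_head // big1 ?addr0 // => j /negbTE hj.
  rewrite hzj hj /blk_head big1 // => l _; by rewrite mxE.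
have := hVI z hz; rewrite -hW dotvBr [dotv _ xbar]dotvC hdot subr0 dotv_blk (bigD1 i) //=.
rewrite big1 ?addr0; last first.
  move=> j /negbTE hj; rewrite hzj hj /dotv big1 // => l _; by rewrite !mxE mulr0.
rewrite hzj eqxx tvec_dot // subr_ge0.
move=> h; exact: h.
Qed.
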